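(* Let $(\mathcal T,\{B_i\})$ be a tree decomposition of a graph $G$, rooted at $r$, with every node at level at most $d$; let $k\ge 1$ and $q\in\mathbb N$, and set $m_j := k^{j/q}\,d/k$ for $j=0,\dots,q-1$, assumed to be positive integers. Define the layer of a node $v$ as $\pi(v):=\max\big(\{-1\}\cup\{j\in\{0,\dots,q-1\}: \ell(v)\equiv 0 \pmod{m_j}\}\big)$. Define new bags $B'_r:=B_r$ and, for $v\neq r$, $$B'_v := B_v\cup\bigcup\Big\{B_w : w\in\mathcal T_{p(v)\leftrightarrow r},\ \pi(w)=\max\{\pi(u): u\in \mathcal T_{p(v)\leftrightarrow w}\}\Big\}.$$ Then $(\mathcal T,\{B'_v\})$ has combinatorial diameter at most $2q+1$.
   Context: Tree decomposition: tree with bags covering vertices and edges of $G$, each vertex's bags forming a connected subtree. $\mathcal T_{x\leftrightarrow y}$ is the set of nodes on the unique $x$–$y$ path in $\mathcal T$ (including $x$ and $y$); $p(v)$ is the parent of $v$; the level $\ell(v)$ is the number of edges on $\mathcal T_{v\leftrightarrow r}$. Combinatorial diameter: for nodes $s,t$ consider the path $\mathcal T_{s\leftrightarrow t}$. A non-endpoint node $v$ of the current path, with its two neighbours on the current path labelled $u,w$ (in some order), is redundant if $B_v\cap B_w\subseteq B_u$; bypassing $v$ deletes $v$ and joins $u,w$. The path has combinatorial length at most $\ell$ if repeatedly bypassing redundant nodes (redundancy evaluated in the current path) yields a path with at most $\ell$ edges. The combinatorial diameter is the minimum $\delta$ such that every path $\mathcal T_{u\leftrightarrow v}$ has combinatorial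 length at most $\delta$ (with respect to the given bags). *)

(* Defs.v *)
From mathcomp Require Import all_boot.
From Stdlib Require Import Reals.

Set Implicit Arguments.
Unset Strict Implicit.
Unset Printing Implicit Defensive.

Section TreeDec.

Variable N : finType.

(* A rooted tree on N is given by its root r and a parent map par,
   with par r = r and every node reaching the root by iterating par.
   (The undirected tree has edges {v, par v} for v <> r.) *)
Definition rooted_tree (r : N) (par : N -> N) : Prop :=
  par r = r /\ forall v : N, exists n : nat, iter n par v = r.

Definition level (r : N) (par : N -> N) (v : N) : nat :=
  index r (traject par v #|N|).

Definition up (r : N) (par : N -> N) (v : N) : seq N :=
  traject par v (level r par v).+1.

(* T_{x <-> y}: the node sequence of the unique x--y path in the tree,
   from x to y, both endpoints included *)
Definition tpath (r : N) (par : N -> N) (x y : N) : seq N :=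
  let ux := up r par x in
  let uy := up r par y in
  let i := find (fun z => z \in uy) ux in
  let lca := nth r ux i in
  take i.+1 ux ++ rev (take (index lca uy) uy).

Variable V : finType.

Definition simple_graph (E : rel V) : Prop :=
  symmetric E /\ irreflexive E.

Definition tree_decomposition (E : rel V) (r : N) (par : N -> N)
    (B : N -> {set V}) : Prop :=
  [/\ forall x : V, exists t : N, x \in B t,
      forall x y : V, E x y -> exists t : N, (x \in B t) && (y \in B t)
    & forall (x : V) (t1 t2 : N), x \in B t1 -> x \in B t2 ->
        forall t, t \in tpath r par t1 t2 -> x \in B t].

Definition redundant (B : N -> {set V}) (u v w : N) : bool :=
  (B v :&: B w \subset B u) || (B v :&: B u \subset B w).

Inductive bypass_step (B : N -> {set V}) : seq N -> seq N -> Prop :=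
  | BStep (s1 s2 : seq N) (u v w : N) :
      redundant B u v w ->
      bypass_step B (s1 ++ [:: u, v, w & s2]) (s1 ++ [:: u, w & s2]).

Inductive bypass_star (B : N -> {set V}) : seq N -> seq N -> Prop :=
  | BRefl s : bypass_star B s s
  | BTrans s1 s2 s3 : bypass_step B s1 s2 -> bypass_star B s2 s3 ->
      bypass_star B s1 s3.

(* path s has combinatorial length at most l: some sequence of bypasses
   yields a path with at most l edges (i.e. at most l+1 nodes) *)
Definition comb_length_le (B : N -> {set V}) (s : seq N) (l : nat) : Prop :=
  exists s', bypass_star B s s' /\ size s' <= l.+1.

Definition comb_diam_le (r : N) (par : N -> N) (B : N -> {set V})
    (delta : nat) : Prop :=
  forall u v : N, comb_length_le B (tpath r par u v) delta.

(* layer, shifted by one: layer1 v = pi(v) + 1, so that the value -1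
   of the paper is represented by 0 and j by j.+1 *)
Definition layer1 (r : N) (par : N -> N) (q : nat) (m : nat -> nat)
    (v : N) : nat :=
  \max_(j < q | level r par v %% m j == 0) j.+1.

Definition new_bags (r : N) (par : N -> N) (q : nat) (m : nat -> nat)
    (B : N -> {set V}) (v : N) : {set V} :=
  if v == r then B r
  else B v :|: \bigcup_(w <- tpath r par (par v) r |
                 layer1 r par q m w ==
                   \max_(u <- tpath r par (par v) w) layer1 r par q m u)
               B w.

End TreeDec.

(* Main.v *)
Require Import Defs.
From mathcomp Require Import all_boot zify.
Set Implicit Arguments. Unset Strict Implicit. Unset Printing Implicit Defensive.


Lemma find_c (T:Type) (a : pred T) x s : find a (x :: s) = if a x then 0 else (find a s).+1.
Proof. by []. Qed.
Lemma find_cm (T:eqType) (s0 : seq T) x s :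
  find (fun w => w \in s0) (x :: s) = if x \in s0 then 0 else (find (fun w => w \in s0) s).+1.
Proof. by []. Qed.
Lemma index_c (T:eqType) (z x : T) s : index z (x :: s) = if x == z then 0 else (index z s).+1.
Proof. by []. Qed.
Lemma take_c (T:Type) n (x : T) s : take n.+1 (x :: s) = x :: take n s.
Proof. by []. Qed.

Section Tree.
Variables (N : finType) (r : N) (par : N -> N).
Hypothesis Hrt : rooted_tree r par.
Local Notation U := (up r par).
Local Notation lev := (level r par).

Lemma ex_small v : exists2 n, n < #|N| & iter n par v = r.
Proof.
have exP : exists n, (fun n => iter n par v == r) n.
  by case: Hrt => _ /(_ v) [n Hn]; exists n; apply/eqP.
case: (ex_minnP exP) => n0 /eqP Hn0 Hmin.
case: (ltnP n0 #|N|) => [lt|ge]; first by exists n0.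
exfalso.
have : ~~ uniq (traject par v n0.+1).
  apply/negP=> /card_uniqP Hc.
  have := max_card (mem (traject par v n0.+1)).
  by rewrite Hc size_traject ltnNge ge.
case/(uniqPn v) => i [j [ltij]]; rewrite size_traject => ltj.
rewrite !nth_traject // ?(ltn_trans ltij) // => Eij.
have ljn : j <= n0 by lia.
have : iter ((n0 - j) + i) par v == r.
  by rewrite iterD Eij -iterD subnK // Hn0.
move/Hmin; lia.
Qed.

Lemma level_iter v : iter (lev v) par v = r.
Proof.
case: (ex_small v) => n ltn Hn.
have Hin : r \in traject par v #|N|.
  by rewrite -Hn -(nth_traject par ltn v) mem_nth // size_traject.
have Hl : lev v < #|N|.
  by have := index_mem r (traject par v #|N|); rewrite size_traject Hin.
by have := nth_index v Hin; rewrite (nth_traject par Hl).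
Qed.

Lemma level_min v m : iter m par v = r -> lev v <= m.
Proof.
move=> Hm.
case: (ex_small v) => n ltn Hn.
case: (ltnP m #|N|) => [lt|ge].
  rewrite /level -Hm -(nth_traject par lt v); apply: index_nth; by rewrite size_traject.
have : lev v <= n.
  rewrite /level -Hn -(nth_traject par ltn v); apply: index_nth; by rewrite size_traject.
move=> h; apply: (leq_trans h); exact: (leq_trans (ltnW ltn)).
Qed.

Lemma level_r : lev r = 0.
Proof. by apply/eqP; rewrite -leqn0; apply: level_min. Qed.

Lemma level_par v : v != r -> lev v = (lev (par v)).+1.
Proof.
move=> vr.
have h1 : lev v <= (lev (par v)).+1 by apply: level_min; rewrite iterSr level_iter.
case E : (lev v) => [|n].
  by move: (level_iter v); rewrite E /= => /eqP; rewrite (negbTE vr).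
apply/eqP; rewrite eqn_leq -E h1 /= E ltnS; apply: level_min.
by rewrite -iterSr -E level_iter.
Qed.

Lemma up_r : U r = [:: r].
Proof. by rewrite /up level_r. Qed.

Lemma up_cons v : v != r -> U v = v :: U (par v).
Proof. by move=> vr; rewrite /up (level_par vr). Qed.

Lemma up_head v : U v = v :: behead (U v).
Proof. by []. Qed.

Lemma in_up v y : v != r -> (y \in U v) = (y == v) || (y \in U (par v)).
Proof. by move=> vr; rewrite (up_cons vr) in_cons. Qed.

Local Opaque up.

Lemma lev_ind (P : N -> Prop) :
  P r -> (forall v, v != r -> P (par v) -> P v) -> forall v, P v.
Proof.
move=> Pr IH v; elim: (lev v).+1 {-2}v (ltnSn (lev v)) => // n IHn w.
case: (eqVneq w r) => [->|wr] // H; apply: IH => //; apply: IHn.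
by move: H; rewrite (level_par wr) ltnS.
Qed.


Lemma up_self x : x \in U x.
Proof. by rewrite up_head mem_head. Qed.

Lemma r_in_up x : r \in U x.
Proof.
move: x; apply: lev_ind => [|x xr IH]; first by rewrite up_r mem_head.
by rewrite up_cons // in_cons IH orbT.
Qed.

Lemma up_le x y : y \in U x -> lev y <= lev x.
Proof.
move: x; apply: lev_ind => [|x xr IH]; first by rewrite up_r inE => /eqP ->.
rewrite up_cons // in_cons => /orP [/eqP -> //|/IH].
by rewrite (level_par xr) => /leq_trans; apply.
Qed.

Lemma up_lt x y : x != r -> y \in U (par x) -> lev y < lev x.
Proof. by move=> xr /up_le; rewrite (level_par xr). Qed.

Lemma up_trans x y z : y \in U x -> z \in U y -> z \in U x.
Proof.
move: x; apply: lev_ind => [|x xr IH]; first by rewrite up_r inE => /eqP ->; rewrite up_r.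
move=> H1 H2; move: H1; rewrite (up_cons xr) in_cons => /orP [/eqP E|Hy].
  by move: H2; rewrite E -(up_cons xr).
by rewrite in_cons (IH Hy H2) orbT.
Qed.

Lemma up_neq x y : x != r -> y \in U (par x) -> y != x.
Proof. by move=> xr /(up_lt xr); apply: contraTneq => ->; rewrite ltnn. Qed.

Lemma dichot b z c : z \in U b -> c \in U b -> c \in U z \/ (c != r /\ z \in U (par c)).
Proof.
move: b; apply: lev_ind => [|b br IH].
  by rewrite up_r !inE => /eqP -> /eqP ->; left; apply: up_self.
rewrite !(in_up _ br) => /orP [/eqP ->|zb] /orP [/eqP ->|cb].
- by left; apply: up_self.
- by left; rewrite (in_up _ br) cb orbT.
- by right.
- exact: IH.
Qed.

Lemma find_up y z : z \in U y -> find (fun w => w \in U z) (U y) = index z (U y).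
Proof.
move: y; apply: lev_ind => [|y yr IH].
  by rewrite up_r inE => /eqP ->; rewrite /= up_self eqxx.
rewrite (in_up _ yr) => /orP [/eqP ->|zy]; rewrite (up_cons yr) find_cm index_c.
  by rewrite mem_head eqxx.
have zny : z != y by apply: up_neq.
have -> : (y \in U z) = false.
  apply/negP => /up_le; have := up_lt yr zy; rewrite ltnNge => /negP; apply.
by rewrite eq_sym (negbTE zny) (IH zy).
Qed.

Lemma tpath_anc y z : z \in U y -> tpath r par y z = take (index z (U y)).+1 (U y).
Proof.
move=> zy; rewrite /tpath find_up // nth_index // (up_head z) (index_c z z) eqxx take0; exact: cats0.

Qed.

Lemma take_all_up x : take (index r (U x)).+1 (U x) = U x.
Proof.
move: x; apply: lev_ind => [|x xr IH]; first by rewrite up_r index_c eqxx.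
by rewrite (up_cons xr) index_c (negbTE xr) take_c IH.
Qed.

Lemma tpath_r x : tpath r par x r = U x.
Proof. by rewrite tpath_anc ?r_in_up // take_all_up. Qed.

Lemma between z1 c z2 : c \in U z1 -> z2 \in U c -> c \in take (index z2 (U z1)).+1 (U z1).
Proof.
move: z1; apply: lev_ind => [|z1 zr IH].
  move=> cr; have cr' : c = r by move: cr; rewrite up_r inE => /eqP.
  subst c => z2r; have -> : z2 = r by move: z2r; rewrite up_r inE => /eqP.
  by rewrite up_r index_c eqxx take_c mem_head.
rewrite (in_up _ zr) => /orP [/eqP ->|cz] H2; rewrite (up_cons zr) index_c take_c.
  by rewrite mem_head.
have z2z : z2 \in U (par z1) by apply: up_trans H2.
by rewrite eq_sym (negbTE (up_neq zr z2z)) in_cons (IH cz H2) orbT.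
Qed.

Lemma take_split y b z : b \in U y -> b != r -> z \in U (par b) ->
  take (index z (U y)).+1 (U y) =
  take (index b (U y)).+1 (U y) ++ take (index z (U (par b))).+1 (U (par b)).
Proof.
move: y; apply: lev_ind => [|y yr IH].
  by rewrite up_r inE => /eqP ->; rewrite eqxx.
rewrite (in_up _ yr) => /orP [/eqP ->|yb] br zb;
  rewrite (up_cons yr) !(index_c _ y (U (par y))) !(take_c _ y (U (par y))).
  have e : (y == z) = false by rewrite eq_sym (negbTE (up_neq br zb)).
  by rewrite eqxx take0 e.
have zy : z \in U (par y).
  by apply: (up_trans yb); rewrite (in_up _ br) zb orbT.
have e1 : (y == b) = false by rewrite eq_sym (negbTE (up_neq yr yb)).
have e2 : (y == z) = false by rewrite eq_sym (negbTE (up_neq yr zy)).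
by rewrite e1 e2 (IH yb br zb).
Qed.

Lemma up_path (P : rel N) x : (forall a, a != r -> P a (par a)) -> path P x (behead (U x)).
Proof.
move=> HP; move: x; apply: lev_ind => [|x xr IH]; first by rewrite up_r.
by rewrite (up_cons xr) /= {1}up_head /= HP // -up_head IH.
Qed.

End Tree.

Lemma in_bigcup_seq (V : finType) (I : eqType) (s : seq I) (P : pred I) (F : I -> {set V}) x :
  x \in \bigcup_(w <- s | P w) F w -> exists w, [/\ w \in s, P w & x \in F w].
Proof.
elim: s => [|a s IH]; first by rewrite big_nil inE.
rewrite big_cons; case: ifP => Pa.
  case/setUP => [xa|/IH [w [ws Pw xw]]]; first by exists a; rewrite mem_head.
  by exists w; rewrite in_cons ws orbT.
by move=> /IH [w [ws Pw xw]]; exists w; rewrite in_cons ws orbT.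
Qed.

Lemma sub_bigcup_seq (V : finType) (I : eqType) (s : seq I) (P : pred I) (F : I -> {set V}) w :
  w \in s -> P w -> F w \subset \bigcup_(w <- s | P w) F w.
Proof.
elim: s => [|a s IH] //; rewrite in_cons big_cons => /orP [/eqP <-|ws] Pw.
  by rewrite Pw subsetUl.
case: ifP => _; last exact: IH.
by apply: subset_trans (IH ws Pw) _; apply: subsetUr.
Qed.

Section Rec.
Variables (N V : finType) (r : N) (par : N -> N).
Hypothesis Hrt : rooted_tree r par.
Variables (B : N -> {set V}) (q : nat) (m : nat -> nat).
Hypothesis Hconn : forall (x : V) (t1 t2 : N), x \in B t1 -> x \in B t2 ->
        forall t, t \in tpath r par t1 t2 -> x \in B t.

Local Notation U := (up r par).
Local Notation lev := (level r par).
Local Notation lay := (layer1 r par q m).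
Definition mxp x b := \max_(u <- tpath r par x b) lay u.
Definition isrec a b := [&& a != r, b \in U (par a) & lay b == mxp (par a) b].
Local Notation B' := (new_bags r par q m B).

Lemma lay_le v : lay v <= q.
Proof. by apply/bigmax_leqP => j _; apply: ltn_ord. Qed.

Lemma mxp_split a b z : a != r -> b \in U (par a) -> b != r -> z \in U (par b) ->
  mxp (par a) z = maxn (mxp (par a) b) (mxp (par b) z).
Proof.
move=> ar ba br zb.
have za : z \in U (par a) by apply: (up_trans Hrt ba); rewrite (in_up Hrt _ br) zb orbT.
by rewrite /mxp !(tpath_anc Hrt) // (take_split Hrt ba br zb) big_cat.
Qed.

Lemma mxp_self x : mxp x x = lay x.
Proof.
rewrite /mxp (tpath_anc Hrt (up_self r par x)) (up_head r par x) (index_c x x) eqxx take_c take0.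
by rewrite big_seq1.
Qed.

Lemma isrec_par a : a != r -> isrec a (par a).
Proof. by move=> ar; rewrite /isrec ar up_self mxp_self eqxx. Qed.

Lemma isrec_trans a b c : isrec a b -> isrec b c -> lay b <= lay c -> isrec a c.
Proof.
case/and3P => ar ba /eqP Eb /and3P [br cb /eqP Ec] le.
rewrite /isrec ar (mxp_split ar ba br cb) -Eb -Ec.
have -> : maxn (lay b) (lay c) = lay c by apply/maxn_idPr.
by rewrite eqxx andbT; apply: (up_trans Hrt ba); rewrite (in_up Hrt _ br) cb orbT.
Qed.

Lemma newb_r : B' r = B r.
Proof. by rewrite /new_bags eqxx. Qed.

Lemma newb a : a != r ->
  B' a = B a :|: \bigcup_(w <- U (par a) | lay w == mxp (par a) w) B w.
Proof. by move=> ar; rewrite /new_bags (negbTE ar) (tpath_r Hrt). Qed.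

Lemma rec_sub a c : isrec a c -> B c \subset B' a.
Proof.
case/and3P => ar ca Ec; rewrite (newb ar).
apply: subset_trans (subsetUr _ _); exact: (sub_bigcup_seq (P := fun w => lay w == mxp (par a) w)).
Qed.

Lemma newb_rec a x : a != r -> x \in B' a -> x \in B a \/ exists z, isrec a z /\ x \in B z.
Proof.
move=> ar; rewrite (newb ar) => /setUP [xa|/in_bigcup_seq [w [wa Pw xw]]]; first by left.
by right; exists w; rewrite /isrec ar wa Pw.
Qed.

Lemma newb_cases a x : x \in B' a -> exists z, z \in U a /\ x \in B z.
Proof.
case: (eqVneq a r) => [->|ar].
  by rewrite newb_r => xr; exists r; rewrite up_self.
case/(newb_rec ar) => [xa|[z [/and3P [_ za _] xz]]]; first by exists a; rewrite up_self.
by exists z; rewrite (in_up Hrt _ ar) za orbT.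
Qed.

Lemma F3 a b c : isrec a b -> isrec b c -> isrec a c -> B' b :&: B' c \subset B' a.
Proof.
move=> Hab Hbc Hac; apply/subsetP => x /setIP [xb xc].
have /and3P [ar ba /eqP Eb] := Hab.
have /and3P [br cb /eqP Ec] := Hbc.
have /and3P [_ ca /eqP Eac] := Hac.
case: (newb_cases xc) => z2 [z2c xz2].
have [z1 [z1b xz1 hz1]] : exists z1, [/\ z1 \in U b, x \in B z1 & z1 = b \/ isrec b z1].
  case/(newb_rec br): xb => [xb|[z [Hz xz]]]; first by exists b; rewrite up_self; split; auto.
  exists z; split; auto; have /and3P [_ zb _] := Hz; by rewrite (in_up Hrt _ br) zb orbT.
have cbb : c \in U b by rewrite (in_up Hrt _ br) cb orbT.
case: (dichot Hrt z1b cbb) => [cz1|[cr z1c]].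
  have xc' : x \in B c.
    apply: (Hconn xz1 xz2); rewrite (tpath_anc Hrt (up_trans Hrt cz1 z2c)).
    exact: (between Hrt cz1 z2c).
  exact: (subsetP (rec_sub Hac)).
have z1nb : z1 != b.
  apply/negP => /eqP E; move: z1c; rewrite E => /(up_lt Hrt cr).
  by move=> h; have := ltn_trans h (up_lt Hrt br cb); rewrite ltnn.
have Hz1 : isrec b z1 by case: hz1 => // E; rewrite E eqxx in z1nb.
have /and3P [_ z1b' /eqP Ez1] := Hz1.
suff : isrec a z1 by move=> H; apply: (subsetP (rec_sub H)).
rewrite /isrec ar (up_trans Hrt ba (_ : z1 \in U b)) //= (mxp_split ar ba br z1b') -Eb -Ez1.
have h1 := mxp_split br cb cr z1c.
have h2 := mxp_split ar ba br cb.
apply/eqP/esym/maxn_idPr.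
have H1 : mxp (par b) c <= lay z1 by rewrite Ez1 h1 leq_maxl.
have H2 : mxp (par a) b <= lay c by rewrite Eac h2 leq_maxl.
by rewrite Eb; apply: (leq_trans H2); rewrite Ec.
Qed.

Lemma F4 a c : isrec a c -> lay c = 0 -> B' c \subset B' a.
Proof.
move=> Hac lc; have /and3P [ar ca /eqP Eac] := Hac.
apply/subsetP => x; case: (eqVneq c r) => [E|cr].
  rewrite E newb_r => xr; apply: (subsetP (rec_sub Hac)); by rewrite E.
case/(newb_rec cr) => [xc|[z [Hz xz]]]; first by apply/(subsetP (rec_sub Hac)).
have /and3P [_ zc /eqP Ez] := Hz.
apply/(subsetP (rec_sub (_ : isrec a z))) => //.
rewrite /isrec ar (mxp_split ar ca cr zc) -Eac lc -Ez max0n eqxx andbT.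
by apply: (up_trans Hrt ca); rewrite (in_up Hrt _ cr) zc orbT.
Qed.

End Rec.

Section Chain.
Variables (N V : finType) (B' : N -> {set V}) (P : rel N) (lay : N -> nat) (q : nat).
Hypothesis Htrans : forall a b c, P a b -> P b c -> lay b <= lay c -> P a c.
Hypothesis Hred : forall a b c, P a b -> P b c -> P a c -> B' b :&: B' c \subset B' a.
Hypothesis HC : forall a c, P a c -> lay c = 0 -> B' c \subset B' a.
Hypothesis Hlay : forall v, lay v <= q.

Lemma bs_trans s1 s2 s3 : bypass_star B' s1 s2 -> bypass_star B' s2 s3 -> bypass_star B' s1 s3.
Proof.
move=> H; elim: H s3 => // x1 x2 x4 H12 _ IH s3 H; apply: BTrans H12 _; exact: IH.
Qed.

Lemma bs_one s1 s2 : bypass_step B' s1 s2 -> bypass_star B' s1 s2.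
Proof. by move=> h; apply: BTrans h (BRefl _ _). Qed.

Lemma bs_ctx p t s s' : bypass_star B' s s' -> bypass_star B' (p ++ s ++ t) (p ++ s' ++ t).
Proof.
elim=> [s0|s1 s2 s3 H12 _ IH]; first exact: BRefl.
apply: BTrans IH; case: H12 => s4 s5 u v w Hr.
have E : forall x, p ++ (s4 ++ x) ++ t = (p ++ s4) ++ x ++ t by move=> x; rewrite !catA.
rewrite !E /=; exact: BStep.
Qed.

Lemma bs_rev s s' : bypass_star B' s s' -> bypass_star B' (rev s) (rev s').
Proof.
elim=> [s0|s1 s2 s3 H12 _ IH]; first exact: BRefl.
apply: BTrans IH; case: H12 => s4 s5 u v w Hr.
have E1 : rev (s4 ++ [:: u, v, w & s5]) = rev s5 ++ [:: w, v, u & rev s4].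
  by rewrite rev_cat !rev_cons -!cats1 -!catA.
have E2 : rev (s4 ++ [:: u, w & s5]) = rev s5 ++ [:: w, u & rev s4].
  by rewrite rev_cat !rev_cons -!cats1 -!catA.
rewrite E1 E2; apply: BStep.
by move: Hr; rewrite /redundant orbC.
Qed.

Definition gtl := fun x y => lay y < lay x.

Lemma chainred l a0 : path P a0 l -> exists l', [/\ bypass_star B' (a0 :: l) (a0 :: l'),
  path P a0 l', last a0 l' = last a0 l & sorted gtl l'].
Proof.
elim: l a0 => [|b l0 IH] a0 /=; first by move=> _; exists [::]; split => //; apply: BRefl.
case/andP => Pab Hp.
case: (IH b Hp) => l0' [bs pl ll so].
have bs1 : bypass_star B' (a0 :: b :: l0) (a0 :: b :: l0') by have := bs_ctx [:: a0] [::] bs; rewrite !cats0.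
case: l0' bs pl ll so bs1 => [|c l1] bs pl ll so bs1.
  by exists [:: b]; split => //=; rewrite Pab.
move: pl => /= /andP [Pbc pl1].
case: (ltnP (lay c) (lay b)) => [lt|le].
  exists [:: b, c & l1]; split => //=; first by rewrite Pab Pbc.
  by rewrite /gtl lt; exact: so.
have Pac := Htrans Pab Pbc le.
exists (c :: l1); split => //=; last by rewrite Pac.
apply: (bs_trans bs1); apply: bs_one.
have := BStep [::] l1 (u := a0) (v := b) (w := c); apply.
by rewrite /redundant (Hred Pab Pbc Pac).
Qed.

Lemma sizeb0 l a : path gtl a l -> size l + lay (last a l) <= lay a.
Proof.
elim: l a => [|b l IH] a /=; first by move=> _; lia.
case/andP => ab so; have := IH b so; rewrite /gtl in ab; lia.
Qed.

Lemma sizebound l x : sorted gtl l -> size l + lay (last x l) <= q.+1.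
Proof.
case: l => [|a l] /=; first by have := Hlay x; lia.
move/sizeb0; have := Hlay a; lia.
Qed.

Lemma rev_ident (s t : N) (Ls Lt : seq N) : last s Ls = last t Lt ->
  rev ((s :: Ls) ++ rev (belast t Lt)) = (t :: Lt) ++ rev (belast s Ls).
Proof.
move=> E; rewrite rev_cat revK (lastI s Ls) rev_rcons E -cat_rcons -lastI.
by [].
Qed.

Lemma final (s t : N) (Ls Lt : seq N) : path P s Ls -> path P t Lt -> last s Ls = last t Lt ->
  comb_length_le B' ((s :: Ls) ++ rev (belast t Lt)) (2 * q + 1).
Proof.
move=> ps pt E.
case: (chainred ps) => Ls' [bs1 ps' ls' so1].
case: (chainred pt) => Lt' [bs2 pt' lt' so2].
have st1 : bypass_star B' ((s :: Ls) ++ rev (belast t Lt)) ((s :: Ls') ++ rev (belast t Lt)).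
  exact: (bs_ctx [::] _ bs1).
have E1 : last s Ls' = last t Lt by rewrite ls'.
have E2 : last s Ls' = last t Lt' by rewrite ls' lt'.
have st2 : bypass_star B' ((s :: Ls') ++ rev (belast t Lt)) ((s :: Ls') ++ rev (belast t Lt')).
  rewrite -[X in bypass_star _ X](revK) -[X in bypass_star _ _ X](revK).
  apply: bs_rev; rewrite (rev_ident E1) (rev_ident E2).
  exact: (bs_ctx [::] _ bs2).
have st := bs_trans st1 st2.
move: (sizebound s so1) (sizebound t so2); rewrite ls' lt' -E => h1 h2.
set c := last s Ls in h1 h2.
have sz : size ((s :: Ls') ++ rev (belast t Lt')) = (size Ls' + size Lt').+1.
  by rewrite size_cat size_rev size_belast /=.
case: (posnP (lay c)) => [l0|lpos]; last first.
  by exists ((s :: Ls') ++ rev (belast t Lt')); split => //; rewrite sz; lia.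
case: (lastP Ls') ps' ls' sz st h1 => [|A c1] ps' ls' sz st h1.
  by exists ((s :: [::]) ++ rev (belast t Lt')); split => //; rewrite sz /=; lia.
case: (lastP Lt') pt' lt' sz st h2 => [|Bq c2] pt' lt' sz st h2.
  by exists ((s :: rcons A c1) ++ rev (belast t [::])); split => //; move: h1; rewrite sz !size_rcons /=; lia.
rewrite last_rcons in ls'.
rewrite rcons_path in ps'; case/andP: ps' => _ Puc.
rewrite belast_rcons in st sz.
set u := last s A in Puc; set w := last t Bq.
have G : (s :: rcons A c1) ++ rev (t :: Bq) = belast s A ++ [:: u, c1, w & rev (belast t Bq)].
  rewrite -rcons_cons (lastI s A) (lastI t Bq) rev_rcons -/u -/w.
  by rewrite -!cats1 -!catA.
rewrite G in st sz.
exists (belast s A ++ [:: u, w & rev (belast t Bq)]); split.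
  apply: (bs_trans st); apply: bs_one; apply: BStep.
  rewrite /redundant; apply/orP; left.
  apply: subset_trans (subsetIl _ _) _; apply: HC => //; by rewrite ls'.
move: sz h1 h2; rewrite !size_cat !size_rcons /= => sz h1 h2.
lia.
Qed.

End Chain.

Lemma take_belast (T:Type) k (x:T) s : k <= size s -> take k (x :: s) = belast x (take k s).
Proof.
elim: s x k => [|y s IH] x [|k] //= H.
by rewrite IH.
Qed.

Lemma last_take (T:Type) (x:T) s i : i <= size s -> last x (take i s) = nth x (x :: s) i.
Proof.
elim: s x i => [|y s IH] x [|i] //= H.
rewrite IH //; apply: set_nth_default => /=; by [].
Qed.

Section Dec.
Variables (N : finType) (r : N) (par : N -> N).
Hypothesis Hrt : rooted_tree r par.
Local Notation U := (up r par).

Lemma tpath_decomp (Pr : rel N) s t : (forall a, a != r -> Pr a (par a)) ->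
  exists Ls Lt, [/\ tpath r par s t = (s :: Ls) ++ rev (belast t Lt),
     path Pr s Ls, path Pr t Lt & last s Ls = last t Lt].
Proof.
move=> HP.
have hasi : has (fun w => w \in U t) (U s) by apply/hasP; exists r; apply: r_in_up.
set i := find (fun w => w \in U t) (U s).
set c := nth r (U s) i.
set k := index c (U t).
have iU : i < size (U s) by rewrite -has_find.
have cUt : c \in U t by apply: nth_find.
have kU : k < size (U t) by rewrite index_mem.
have -> : tpath r par s t = take i.+1 (U s) ++ rev (take k (U t)) by [].
exists (take i (behead (U s))), (take k (behead (U t))).
have eUs := up_head r par s; have eUt := up_head r par t.
have szs : size (U s) = (size (behead (U s))).+1 by rewrite {1}eUs.
have szt : size (U t) = (size (behead (U t))).+1 by rewrite {1}eUt.
split.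
- rewrite {1}eUs take_c {1}eUt take_belast //.
- exact: take_path _ (up_path Hrt s HP).
- exact: take_path _ (up_path Hrt t HP).
rewrite !last_take; first last.
- by move: kU; rewrite szt ltnS.
- by move: iU; rewrite szs ltnS.
rewrite -eUs -eUt (set_nth_default r s iU) -/c.
by rewrite nth_index.
Qed.

End Dec.
From Stdlib Require Import Reals.

Theorem lemma4p5 (V N : finType) (E : rel V) (r : N) (par : N -> N)
    (B : N -> {set V}) (d : nat) (k : R) (q : nat) (m : nat -> nat) :
  simple_graph E ->
  rooted_tree r par ->
  tree_decomposition E r par B ->
  (forall v : N, level r par v <= d) ->
  (1 <= k)%R ->
  (forall j : nat, j < q ->
     INR (m j) = (Rpower k (INR j / INR q) * INR d / k)%R /\ 0 < m j) ->
  comb_diam_le r par (new_bags r par q m B) (2 * q + 1).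
Proof.
move=> _ Hrt [_ _ Hconn] _ _ _ u v.
have HP : forall a, a != r -> isrec r par q m a (par a).
  by move=> a ar; apply: (isrec_par Hrt).
case: (tpath_decomp Hrt u v HP) => Ls [Lt [-> ps pt Elast]].
apply: (final (P := isrec r par q m) (lay := layer1 r par q m)) => //.
- by move=> a b c; apply: (isrec_trans Hrt).
- by move=> a b c; apply: (F3 Hrt Hconn).
- by move=> a c; apply: (F4 Hrt).
- by move=> w; apply: lay_le.
Qed.
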